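(* In the single-node mining process with $\phi(s)=\log_2 s$ and $R\ge2$, the expected total number of hash attempts needed for the node to build a block-chain of length $L\ge1$ is at most $$D_s\sum_{n=0}^{L-1}\frac{1}{\log_2(n+1)+\log_2R}.$$
   Context: Fix real parameters $M>0$ (scale of the system), $R\ge 2$ (the stake reward StakRwd), $0<D_c\le D_s$ (coin-issue difficulty constant CoinD and stake-issue difficulty constant StakD). Put $p=D_c/D_s$, $q=1-p$. Single-node mining process with threshold function $\phi$: a node, who makes no stake transactions with anybody, starts with stake $S_0=0$. For $n=0,1,2,\dots$ the $(n+1)$-th block is produced as follows: the node makes successive hash attempts, each producing a hash value uniformly distributed on $[0,M]$, independent of all previous randomness; the block is created at the first attempt whose hash $h$ satisfies $h\le M\phi(R+S_n)/D_c$ (the coin-issue threshold), and then $S_{n+1}=S_n+R$ if moreover $h\le M\phi(R+S_n)/D_s$ (the stake-issue threshold), otherwise $S_{n+1}=S_n$. Assume $0<\phi(R+S)\le D_c$ for all $S\in\{0,R,2R,\dots,(L-1)R\}$. Time is measured as the total number of hash attempts. In this statement $\phi(s)=\log_2 s$ (logarithmic stake system). *)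

(* Defs.v *)
From Stdlib Require Import Reals Lra List.
Open Scope R_scope.

Definition log2 (s : R) : R := ln s / ln 2.

Definition unif_cdf (M x : R) : R := Rmax 0 (Rmin 1 (x / M)).

(* Classification of a single hash attempt relative to the current thresholds:
   Fail      : h >  coin-issue threshold (no block)
   CoinOnly  : stake-threshold < h <= coin-issue threshold (block, stake unchanged)
   StakeCoin : h <= stake-issue threshold (block, stake increases by R) *)
Inductive outcome := Fail | CoinOnly | StakeCoin.

Definition step_prob (phi : R -> R) (M Rw Dc Ds S : R) (o : outcome) : R :=
  let c := unif_cdf M (M * phi (Rw + S) / Dc) in
  let s := unif_cdf M (M * phi (Rw + S) / Ds) in
  match o with
  | Fail => 1 - c
  | CoinOnly => c - s
  | StakeCoin => s
  end.

Definition next_stake (Rw S : R) (o : outcome) : R :=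
  match o with StakeCoin => S + Rw | _ => S end.

Fixpoint path_prob (phi : R -> R) (M Rw Dc Ds S : R) (l : list outcome) : R :=
  match l with
  | nil => 1
  | o :: l' => step_prob phi M Rw Dc Ds S o * path_prob phi M Rw Dc Ds (next_stake Rw S o) l'
  end.

Fixpoint all_hist (t : nat) : list (list outcome) :=
  match t with
  | O => nil :: nil
  | S t' => flat_map (fun l => (Fail :: l) :: (CoinOnly :: l) :: (StakeCoin :: l) :: nil)
                     (all_hist t')
  end.

Definition is_block (o : outcome) : bool :=
  match o with Fail => false | _ => true end.

Definition nblocks (l : list outcome) : nat := length (filter is_block l).

Definition completes_at (L : nat) (l : list outcome) : bool :=
  Nat.eqb (nblocks l) L && is_block (last l Fail).

(* P(T = t), T = total number of hash attempts until the chain has length L,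
   for the process started at stake S_0 = 0 *)
Definition prob_T (phi : R -> R) (M Rw Dc Ds : R) (L t : nat) : R :=
  fold_right Rplus 0
    (map (fun l => if completes_at L l then path_prob phi M Rw Dc Ds 0 l else 0)
         (all_hist t)).

(* Main.v *)
Require Import Defs.
From Stdlib Require Import Reals Lra Lia List.
Open Scope R_scope.


Definition sumL (g : list outcome -> R) (ls : list (list outcome)) : R :=
  fold_right Rplus 0 (map g ls).

Lemma all_hist_S t : all_hist (S t) =
  flat_map (fun l => (Fail :: l) :: (CoinOnly :: l) :: (StakeCoin :: l) :: nil) (all_hist t).
Proof. reflexivity. Qed.

Lemma sumL_flat g ls : sumL g (flat_map (fun l => (Fail :: l) :: (CoinOnly :: l) :: (StakeCoin :: l) :: nil) ls)
  = sumL (fun l => g (Fail :: l) + g (CoinOnly :: l) + g (StakeCoin :: l)) ls.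
Proof. unfold sumL; induction ls as [|a ls IH]; simpl; [ring| rewrite IH; ring]. Qed.

Lemma sumL_lin x y z g1 g2 g3 ls :
  sumL (fun l => x * g1 l + y * g2 l + z * g3 l) ls = x * sumL g1 ls + y * sumL g2 ls + z * sumL g3 ls.
Proof. unfold sumL; induction ls as [|a ls IH]; simpl; [ring| rewrite IH; ring]. Qed.

Lemma sumL_ext g1 g2 ls : (forall l, g1 l = g2 l) -> sumL g1 ls = sumL g2 ls.
Proof. intro H; unfold sumL; induction ls as [|a ls IH]; simpl; [ring| rewrite IH, H; ring]. Qed.

Lemma sumL_zero ls : sumL (fun _ => 0) ls = 0.
Proof. unfold sumL; induction ls as [|a ls IH]; simpl; [ring| rewrite IH; ring]. Qed.

Definition Dp (j : nat) (l : list outcome) : bool :=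
  match l with nil => Nat.eqb j 0 | _ => completes_at j l end.

Definition G M Rw Dc Ds S j t : R :=
  sumL (fun l => if Dp j l then path_prob log2 M Rw Dc Ds S l else 0) (all_hist t).

Lemma last_nonblock l d : is_block d = false -> nblocks l = 0%nat -> is_block (last l d) = false.
Proof.
  induction l as [|a l IH]; intros Hd Hn; simpl; auto.
  unfold nblocks in Hn; simpl in Hn.
  destruct (is_block a) eqn:Ea; [discriminate|].
  destruct l as [|b l']; auto.
Qed.

Lemma comp0 l : completes_at 0 l = false.
Proof.
  unfold completes_at. destruct (Nat.eqb (nblocks l) 0) eqn:E; auto.
  apply Nat.eqb_eq in E. simpl. apply last_nonblock; auto.
Qed.

Lemma compF j l : completes_at (S j) (Fail :: l) = Dp (S j) l.
Proof. destruct l; reflexivity. Qed.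
Lemma compC j l : completes_at (S j) (CoinOnly :: l) = Dp j l.
Proof. destruct l; [destruct j|]; reflexivity. Qed.
Lemma compSC j l : completes_at (S j) (StakeCoin :: l) = Dp j l.
Proof. destruct l; [destruct j|]; reflexivity. Qed.

Lemma G_rec M Rw Dc Ds S j t :
  G M Rw Dc Ds S (Datatypes.S j) (Datatypes.S t) =
  step_prob log2 M Rw Dc Ds S Fail * G M Rw Dc Ds S (Datatypes.S j) t
  + step_prob log2 M Rw Dc Ds S CoinOnly * G M Rw Dc Ds S j t
  + step_prob log2 M Rw Dc Ds S StakeCoin * G M Rw Dc Ds (S + Rw) j t.
Proof.
  unfold G. rewrite all_hist_S, sumL_flat, <- sumL_lin.
  apply sumL_ext; intro l.
  change (Dp (Datatypes.S j) (Fail :: l)) with (completes_at (Datatypes.S j) (Fail :: l)).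
  change (Dp (Datatypes.S j) (CoinOnly :: l)) with (completes_at (Datatypes.S j) (CoinOnly :: l)).
  change (Dp (Datatypes.S j) (StakeCoin :: l)) with (completes_at (Datatypes.S j) (StakeCoin :: l)).
  rewrite compF, compC, compSC. simpl path_prob.
  unfold step_prob; simpl.
  destruct (Dp (Datatypes.S j) l); destruct (Dp j l); ring.
Qed.

Lemma G_0S M Rw Dc Ds S t : G M Rw Dc Ds S 0 (Datatypes.S t) = 0.
Proof.
  unfold G. rewrite all_hist_S, sumL_flat. transitivity (sumL (fun _ => 0) (all_hist t)); [|apply sumL_zero].
  apply sumL_ext; intro l.
  change (Dp 0 (Fail :: l)) with (completes_at 0 (Fail :: l)).
  change (Dp 0 (CoinOnly :: l)) with (completes_at 0 (CoinOnly :: l)).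
  change (Dp 0 (StakeCoin :: l)) with (completes_at 0 (StakeCoin :: l)).
  rewrite !comp0; simpl; ring.
Qed.

Lemma G_00 M Rw Dc Ds S : G M Rw Dc Ds S 0 0 = 1.
Proof. unfold G, sumL; simpl; ring. Qed.
Lemma G_S0 M Rw Dc Ds S j : G M Rw Dc Ds S (Datatypes.S j) 0 = 0.
Proof. unfold G, sumL; simpl; ring. Qed.


Lemma cv_ext (u v : nat -> R) l : (forall n, u n = v n) -> Un_cv u l -> Un_cv v l.
Proof. intros H Hc eps He. destruct (Hc eps He) as [N HN]. exists N; intros n Hn. rewrite <- H; auto. Qed.

Lemma cv_const c : Un_cv (fun _ => c) c.
Proof. intros eps He. exists 0%nat; intros. unfold Rdist. rewrite Rminus_diag, Rabs_R0; lra. Qed.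

Lemma cv_scal (u : nat -> R) l c : Un_cv u l -> Un_cv (fun n => c * u n) (c * l).
Proof. intro H. apply (CV_mult (fun _ => c) u). apply cv_const. exact H. Qed.

Lemma grow_sum (x : nat -> R) : (forall t, 0 <= x t) -> Un_growing (sum_f_R0 x).
Proof. intros H n. rewrite tech5. specialize (H (S n)). lra. Qed.

Lemma cv_of_bounded (u : nat -> R) B : Un_growing u -> (forall n, u n <= B) -> {l | Un_cv u l}.
Proof. intros Hg Hb. apply growing_cv; auto. exists B. intros y [n ->]. apply Hb. Qed.

Lemma key (x y z : nat -> R) (a b d Ey Ez : R) :
  0 <= a -> 0 <= b -> 0 <= d -> a + b + d = 1 -> a < 1 ->
  (forall t, 0 <= y t) -> (forall t, 0 <= z t) ->
  Un_cv (sum_f_R0 y) 1 -> Un_cv (sum_f_R0 z) 1 ->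
  Un_cv (sum_f_R0 (fun t => INR t * y t)) Ey -> Un_cv (sum_f_R0 (fun t => INR t * z t)) Ez ->
  x 0%nat = 0 -> (forall t, x (S t) = a * x t + b * y t + d * z t) ->
  (forall t, 0 <= x t) /\ Un_cv (sum_f_R0 x) 1 /\
  Un_cv (sum_f_R0 (fun t => INR t * x t)) ((1 + b * Ey + d * Ez) / (1 - a)).
Proof.
  intros ha hb hd habd ha1 hy hz cy cz cEy cEz hx0 hxS.
  assert (hx : forall t, 0 <= x t).
  { induction t as [|t IH]; [rewrite hx0; lra| rewrite hxS].
    pose proof (hy t); pose proof (hz t).
    assert (0 <= a * x t) by (apply Rmult_le_pos; auto).
    assert (0 <= b * y t) by (apply Rmult_le_pos; auto).
    assert (0 <= d * z t) by (apply Rmult_le_pos; auto). lra. }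
  set (A := sum_f_R0 x). set (B := sum_f_R0 y). set (C := sum_f_R0 z).
  assert (Arec : forall n, A (S n) = a * A n + b * B n + d * C n).
  { induction n as [|n IH].
    - unfold A, B, C; simpl. rewrite hxS, hx0. ring.
    - unfold A, B, C in *. rewrite (tech5 x (S n)). rewrite IH at 1. rewrite (tech5 x n), (tech5 y n), (tech5 z n), hxS. ring. }
  assert (By : forall n, B n <= 1) by (intro; apply growing_ineq; auto; apply grow_sum; auto).
  assert (Cz : forall n, C n <= 1) by (intro; apply growing_ineq; auto; apply grow_sum; auto).
  assert (B0 : forall n, 0 <= B n).
  { intro n; unfold B. apply cond_pos_sum; auto. }
  assert (C0 : forall n, 0 <= C n).
  { intro n; unfold C. apply cond_pos_sum; auto. }
  assert (Ab : forall n, A n <= 1).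
  { induction n as [|n IH]; [unfold A; simpl; rewrite hx0; lra|].
    rewrite Arec. specialize (By n); specialize (Cz n).
    assert (a * A n <= a * 1) by (apply Rmult_le_compat_l; auto).
    assert (b * B n <= b * 1) by (apply Rmult_le_compat_l; auto).
    assert (d * C n <= d * 1) by (apply Rmult_le_compat_l; auto). lra. }
  assert (Ag : Un_growing A) by (apply grow_sum; auto).
  destruct (cv_of_bounded A 1 Ag Ab) as [lA cA].
  assert (lA1 : lA = 1).
  { assert (c1 : Un_cv (fun n => A (n + 1)%nat) lA) by (apply CV_shift'; auto).
    assert (c2 : Un_cv (fun n => a * A n + b * B n + d * C n) (a * lA + b * 1 + d * 1)).
    { apply CV_plus; [apply CV_plus|]; apply cv_scal; auto. }
    assert (c3 : Un_cv (fun n => A (n + 1)%nat) (a * lA + b * 1 + d * 1)).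
    { eapply cv_ext; [|exact c2]. intro n; simpl. rewrite Nat.add_1_r, Arec; reflexivity. }
    pose proof (UL_sequence _ _ _ c1 c3).
    assert ((1 - a) * (lA - 1) = 0) by (ring_simplify; ring_simplify in H; lra).
    apply Rmult_integral in H0. destruct H0; lra. }
  subst lA.
  split; [exact hx|]. split; [exact cA|].
  set (F := sum_f_R0 (fun t => INR t * x t)).
  set (Hy := sum_f_R0 (fun t => INR t * y t)).
  set (Hz := sum_f_R0 (fun t => INR t * z t)).
  assert (Frec : forall n, F (S n) = a * (F n + A n) + b * (Hy n + B n) + d * (Hz n + C n)).
  { induction n as [|n IH].
    - unfold F, A, B, C, Hy, Hz; simpl. rewrite hxS, hx0. ring.
    - unfold F, A, B, C, Hy, Hz in *.
      rewrite (tech5 (fun t => INR t * x t) (S n)). rewrite IH at 1.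
      rewrite (tech5 (fun t => INR t * x t) n), (tech5 x n), (tech5 y n), (tech5 z n), (tech5 (fun t => INR t * y t) n), (tech5 (fun t => INR t * z t) n), hxS.
      rewrite (S_INR (S n)). ring. }
  assert (Hyg : Un_growing Hy) by (apply grow_sum; intro; apply Rmult_le_pos; auto; apply pos_INR).
  assert (Hzg : Un_growing Hz) by (apply grow_sum; intro; apply Rmult_le_pos; auto; apply pos_INR).
  assert (HyE : forall n, Hy n <= Ey) by (intro; apply growing_ineq; auto).
  assert (HzE : forall n, Hz n <= Ez) by (intro; apply growing_ineq; auto).
  assert (Ey0 : 0 <= Ey) by (pose proof (HyE 0%nat); unfold Hy in *; simpl in *; lra).
  assert (Ez0 : 0 <= Ez) by (pose proof (HzE 0%nat); unfold Hz in *; simpl in *; lra).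
  set (X := (1 + b * Ey + d * Ez) / (1 - a)).
  assert (hX : (1 - a) * X = 1 + b * Ey + d * Ez) by (unfold X; field; lra).
  assert (X0 : 0 <= X).
  { unfold X. apply Rmult_le_pos; [|left; apply Rinv_0_lt_compat; lra].
    assert (0 <= b * Ey) by (apply Rmult_le_pos; auto).
    assert (0 <= d * Ez) by (apply Rmult_le_pos; auto). lra. }
  assert (Fb : forall n, F n <= X).
  { induction n as [|n IH]; [unfold F; simpl; lra|].
    rewrite Frec. specialize (Ab n); specialize (By n); specialize (Cz n).
    specialize (HyE n); specialize (HzE n).
    assert (a * (F n + A n) <= a * (X + 1)) by (apply Rmult_le_compat_l; lra).
    assert (b * (Hy n + B n) <= b * (Ey + 1)) by (apply Rmult_le_compat_l; lra).
    assert (d * (Hz n + C n) <= d * (Ez + 1)) by (apply Rmult_le_compat_l; lra).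
    lra. }
  assert (Fg : Un_growing F) by (apply grow_sum; intro; apply Rmult_le_pos; auto; apply pos_INR).
  destruct (cv_of_bounded F X Fg Fb) as [lF cF].
  assert (lFX : lF = X).
  { assert (c1 : Un_cv (fun n => F (n + 1)%nat) lF) by (apply CV_shift'; auto).
    assert (c2 : Un_cv (fun n => a * (F n + A n) + b * (Hy n + B n) + d * (Hz n + C n))
                       (a * (lF + 1) + b * (Ey + 1) + d * (Ez + 1))).
    { apply CV_plus; [apply CV_plus|]; apply cv_scal; apply CV_plus; auto. }
    assert (c3 : Un_cv (fun n => F (n + 1)%nat) (a * (lF + 1) + b * (Ey + 1) + d * (Ez + 1))).
    { eapply cv_ext; [|exact c2]. intro n; simpl. rewrite Nat.add_1_r, Frec; reflexivity. }
    pose proof (UL_sequence _ _ _ c1 c3).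
    assert ((1 - a) * (lF - X) = 0) by (ring_simplify; ring_simplify in H; lra).
    apply Rmult_integral in H0. destruct H0; lra. }
  rewrite <- lFX. exact cF.
Qed.


Definition phiN (Rw : R) (n : nat) : R := log2 (Rw + INR n * Rw).

Fixpoint Eexp (Rw Dc Ds : R) (j k : nat) : R :=
  match j with
  | O => 0
  | S j' => Dc / phiN Rw k + (1 - Dc / Ds) * Eexp Rw Dc Ds j' k + (Dc / Ds) * Eexp Rw Dc Ds j' (S k)
  end.

Lemma unif_val M u D : 0 < M -> 0 < D -> 0 <= u / D <= 1 -> unif_cdf M (M * u / D) = u / D.
Proof.
  intros hM hD hu. unfold unif_cdf.
  replace (M * u / D / M) with (u / D) by (field; lra).
  rewrite Rmin_right by lra. rewrite Rmax_right by lra. reflexivity.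
Qed.

Lemma main_ind M Rw Dc Ds : 0 < M -> 0 < Dc -> Dc <= Ds ->
  forall j k, (forall m, (m < j)%nat -> 0 < phiN Rw (k + m) /\ phiN Rw (k + m) <= Dc) ->
  (forall t, 0 <= G M Rw Dc Ds (INR k * Rw) j t) /\
  Un_cv (sum_f_R0 (G M Rw Dc Ds (INR k * Rw) j)) 1 /\
  Un_cv (sum_f_R0 (fun t => INR t * G M Rw Dc Ds (INR k * Rw) j t)) (Eexp Rw Dc Ds j k).
Proof.
  intros hM hDc hDcs. induction j as [|j IH]; intros k HV.
  - assert (Hg : forall t, G M Rw Dc Ds (INR k * Rw) 0 t = match t with O => 1 | _ => 0 end).
    { intros [|t]; [apply G_00| apply G_0S]. }
    split; [intro t; rewrite Hg; destruct t; lra|]. split.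
    + apply (cv_ext (fun _ => 1)); [|apply cv_const].
      intro n; induction n as [|n IHn]; [simpl; rewrite Hg; reflexivity|].
      rewrite tech5, <- IHn, Hg; ring.
    + simpl Eexp. apply (cv_ext (fun _ => 0)); [|apply cv_const].
      intro n; induction n as [|n IHn]; [simpl; rewrite Hg; ring|].
      rewrite tech5, <- IHn, Hg; ring.
  - assert (HV0 : 0 < phiN Rw k /\ phiN Rw k <= Dc).
    { specialize (HV 0%nat ltac:(lia)). rewrite Nat.add_0_r in HV. exact HV. }
    destruct (IH k) as [y0 [yc yE]].
    { intros m Hm. apply HV. lia. }
    destruct (IH (S k)) as [z0 [zc zE]].
    { intros m Hm. replace (S k + m)%nat with (k + S m)%nat by lia. apply HV. lia. }
    set (ph := phiN Rw k) in *.
    assert (hDs : 0 < Ds) by lra.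
    assert (c_eq : unif_cdf M (M * log2 (Rw + INR k * Rw) / Dc) = ph / Dc).
    { apply unif_val; auto. unfold ph, phiN in *. split.
      - apply Rmult_le_pos; [lra| left; apply Rinv_0_lt_compat; lra].
      - apply Rmult_le_reg_r with Dc; auto. field_simplify; lra. }
    assert (s_le : ph / Ds <= ph / Dc).
    { unfold Rdiv. apply Rmult_le_compat_l; [lra|]. apply Rinv_le_contravar; lra. }
    assert (s_eq : unif_cdf M (M * log2 (Rw + INR k * Rw) / Ds) = ph / Ds).
    { apply unif_val; auto. split.
      - apply Rmult_le_pos; [lra| left; apply Rinv_0_lt_compat; lra].
      - apply Rle_trans with (ph / Dc); auto.
        apply Rmult_le_reg_r with Dc; auto. field_simplify; lra. }
    assert (Hnext : INR k * Rw + Rw = INR (S k) * Rw) by (rewrite S_INR; ring).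
    assert (c_pos : 0 < ph / Dc) by (apply Rdiv_lt_0_compat; lra).
    assert (s_pos : 0 < ph / Ds) by (apply Rdiv_lt_0_compat; lra).
    assert (hx0 : G M Rw Dc Ds (INR k * Rw) (S j) 0 = 0) by apply G_S0.
    assert (hxS : forall t, G M Rw Dc Ds (INR k * Rw) (S j) (S t) =
       (1 - ph / Dc) * G M Rw Dc Ds (INR k * Rw) (S j) t + (ph / Dc - ph / Ds) * G M Rw Dc Ds (INR k * Rw) j t
       + ph / Ds * G M Rw Dc Ds (INR (S k) * Rw) j t).
    { intro t. rewrite G_rec. unfold step_prob. cbv zeta. rewrite c_eq, s_eq, Hnext. reflexivity. }
    assert (c_le1 : ph / Dc <= 1).
    { apply Rmult_le_reg_r with Dc; auto. field_simplify; lra. }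
    destruct (key _ _ _ (1 - ph / Dc) (ph / Dc - ph / Ds) (ph / Ds) _ _
       ltac:(lra) ltac:(lra) ltac:(lra) ltac:(lra) ltac:(lra) y0 z0 yc zc yE zE hx0 hxS) as [x0 [xc xE]].
    split; [exact x0|]. split; [exact xc|].
    replace (Eexp Rw Dc Ds (S j) k) with
      ((1 + (ph / Dc - ph / Ds) * Eexp Rw Dc Ds j k + ph / Ds * Eexp Rw Dc Ds j (S k)) / (1 - (1 - ph / Dc))).
    * exact xE.
    * simpl Eexp. fold ph. field. lra.
Qed.


Fixpoint U (p : R) (w : nat -> R) (i k : nat) : R :=
  match i with
  | O => w k
  | S i' => (1 - p) * U p w i' k + p * U p w i' (S k)
  end.

Definition gI (r : nat) : R := 1 / (INR r + 1).

Lemma INR_p1 n : 0 < INR n + 1.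
Proof. pose proof (pos_INR n); lra. Qed.

Lemma U_mono p w1 w2 i : 0 <= p <= 1 -> forall k,
  (forall r, (k <= r <= k + i)%nat -> w1 r <= w2 r) -> U p w1 i k <= U p w2 i k.
Proof.
  intro hp. induction i as [|i IH]; intros k H; simpl.
  - apply H; lia.
  - apply Rplus_le_compat; apply Rmult_le_compat_l; try lra; apply IH; intros r Hr; apply H; lia.
Qed.

Lemma U_scal p c w i : forall k, U p (fun r => c * w r) i k = c * U p w i k.
Proof. induction i as [|i IH]; intro k; simpl; [reflexivity| rewrite !IH; ring]. Qed.

Lemma Phi p i : forall m, p * (INR i + 1) * U p gI i (S m) + INR (S m) * U p gI (S i) m = 1.
Proof.
  induction i as [|i IH]; intro m.
  - simpl U. unfold gI. rewrite !S_INR. simpl INR. field.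
    split; pose proof (pos_INR m); lra.
  - pose proof (IH m) as H1. pose proof (IH (S m)) as H2.
    cbn [U] in *. rewrite !S_INR in *.
    set (a1 := U p gI i (S m)) in *. set (a2 := U p gI i (S (S m))) in *.
    set (w0 := U p gI i m) in *.
    transitivity ((1 - p) * (p * (INR i + 1) * a1 + (INR m + 1) * ((1 - p) * w0 + p * a1))
                  + p * (p * (INR i + 1) * a2 + (INR m + 1 + 1) * ((1 - p) * a1 + p * a2))).
    + ring.
    + rewrite H1, H2. ring.
Qed.

Lemma Ybound p i : 0 <= p <= 1 -> p * (INR i + 1) * U p gI i 0 <= 1.
Proof.
  intro hp. induction i as [|i IH].
  - simpl. unfold gI. simpl. lra.
  - pose proof (Phi p i 0) as H. cbn [U] in *. rewrite S_INR in *. simpl INR in H. replace (0 + 1) with 1 in H by ring.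
    set (v0 := U p gI i 0) in *. set (v1 := U p gI i 1) in *.
    assert (E : p * (INR i + 1 + 1) * ((1 - p) * v0 + p * v1) = (1 - p) * (p * (INR i + 1) * v0) + p * (p * (INR i + 1) * v1 + 1 * ((1 - p) * v0 + p * v1))) by ring.
    rewrite E, H.
    assert ((1 - p) * (p * (INR i + 1) * v0) <= (1 - p) * 1) by (apply Rmult_le_compat_l; lra).
    lra.
Qed.

Lemma ln_1x_lt x : 0 < x -> ln (1 + x) < x.
Proof.
  intro hx. rewrite <- (ln_exp x) at 2. apply ln_increasing; [lra|]. apply exp_ineq1; lra.
Qed.

Lemma ln2_pos : 0 < ln 2.
Proof. pose proof ln_lt_2; lra. Qed.

Lemma Qdec_prod n : (INR n + 1) * (ln (INR n + 1 + 1) + ln 2) <= (INR n + 1 + 1) * (ln (INR n + 1) + ln 2).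
Proof.
  set (a := INR n + 1). assert (ha : 1 <= a) by (unfold a; pose proof (pos_INR n); lra).
  assert (E : ln (a + 1) = ln a + ln (1 + / a)).
  { rewrite <- ln_mult; [|lra|]. f_equal. field. lra.
    assert (0 < / a) by (apply Rinv_0_lt_compat; lra). lra. }
  assert (Hl : ln (1 + / a) < / a) by (apply ln_1x_lt; apply Rinv_0_lt_compat; lra).
  assert (Hl2 : a * ln (1 + / a) <= 1).
  { assert (a * ln (1 + / a) < a * / a) by (apply Rmult_lt_compat_l; lra).
    rewrite Rinv_r in H; lra. }
  rewrite E.
  destruct n as [|n].
  - unfold a in *. simpl INR in *. replace (0 + 1) with 1 by ring. rewrite ln_1.
    replace (1 + / 1) with 2 by field. lra.
  - assert (ha2 : 2 <= a) by (unfold a; rewrite S_INR; pose proof (pos_INR n); lra).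
    assert (ln 2 <= ln a).
    { destruct (Req_dec a 2) as [e|e]; [rewrite e; lra|]. left; apply ln_increasing; lra. }
    pose proof ln_lt_2.
    assert (0 <= ln a) by (pose proof ln2_pos; lra).
    nra.
Qed.

Definition Qf (n : nat) : R := (ln (INR n + 1) + ln 2) / (INR n + 1).

Lemma Qdec n : Qf (S n) <= Qf n.
Proof.
  unfold Qf. rewrite S_INR. pose proof (Qdec_prod n) as H. pose proof (INR_p1 n).
  apply Rmult_le_reg_r with ((INR n + 1) * (INR n + 1 + 1)); [nra|].
  replace ((ln (INR n + 1 + 1) + ln 2) / (INR n + 1 + 1) * ((INR n + 1) * (INR n + 1 + 1)))
    with ((INR n + 1) * (ln (INR n + 1 + 1) + ln 2)) by (field; lra).
  replace ((ln (INR n + 1) + ln 2) / (INR n + 1) * ((INR n + 1) * (INR n + 1 + 1)))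
    with ((INR n + 1 + 1) * (ln (INR n + 1) + ln 2)) by (field; lra).
  exact H.
Qed.

Lemma Qmono r i : (r <= i)%nat -> Qf i <= Qf r.
Proof.
  induction i as [|i IH]; intro H.
  - replace r with 0%nat by lia. lra.
  - destruct (Nat.eq_dec r (S i)) as [->|ne]; [lra|].
    pose proof (Qdec i). assert (Qf i <= Qf r) by (apply IH; lia). lra.
Qed.

Lemma core Rw r i : 2 <= Rw -> (r <= i)%nat ->
  (INR r + 1) * (ln (INR i + 1) + ln Rw) <= (INR i + 1) * (ln (INR r + 1) + ln Rw).
Proof.
  intros hR H. pose proof (Qmono r i H) as Q. unfold Qf in Q.
  pose proof (INR_p1 r); pose proof (INR_p1 i).
  assert (Q' : (INR r + 1) * (ln (INR i + 1) + ln 2) <= (INR i + 1) * (ln (INR r + 1) + ln 2)).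
  { apply Rmult_le_reg_r with (/ ((INR r + 1) * (INR i + 1))).
    - apply Rinv_0_lt_compat; nra.
    - replace ((INR r + 1) * (ln (INR i + 1) + ln 2) * / ((INR r + 1) * (INR i + 1)))
        with ((ln (INR i + 1) + ln 2) / (INR i + 1)) by (field; lra).
      replace ((INR i + 1) * (ln (INR r + 1) + ln 2) * / ((INR r + 1) * (INR i + 1)))
        with ((ln (INR r + 1) + ln 2) / (INR r + 1)) by (field; lra).
      exact Q. }
  assert (hl : ln 2 <= ln Rw).
  { destruct (Req_dec Rw 2) as [e|e]; [rewrite e; lra|]. left; apply ln_increasing; lra. }
  assert (hri : INR r <= INR i) by (apply le_INR; exact H).
  assert (0 <= (INR i - INR r) * (ln Rw - ln 2)) by (apply Rmult_le_pos; lra).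
  nra.
Qed.

Definition fU (Rw : R) (n : nat) : R := 1 / log2 (Rw + INR n * Rw).

Lemma log2_split Rw n : 2 <= Rw -> log2 (Rw + INR n * Rw) = (ln (INR n + 1) + ln Rw) / ln 2.
Proof.
  intro hR. unfold log2. replace (Rw + INR n * Rw) with ((INR n + 1) * Rw) by ring.
  rewrite ln_mult; [reflexivity| apply INR_p1| lra].
Qed.

Lemma lnP_pos Rw n : 2 <= Rw -> 0 < ln (INR n + 1) + ln Rw.
Proof.
  intro hR. assert (0 <= ln (INR n + 1)).
  { destruct n as [|n]; [simpl; replace (0+1) with 1 by ring; rewrite ln_1; lra|].
    left. rewrite <- ln_1. apply ln_increasing; [lra|]. rewrite S_INR; pose proof (pos_INR n); lra. }
  assert (0 < ln Rw) by (rewrite <- ln_1; apply ln_increasing; lra). lra.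
Qed.

Lemma fU_pos Rw n : 2 <= Rw -> 0 < fU Rw n.
Proof.
  intro hR. unfold fU. rewrite log2_split by auto. pose proof (lnP_pos Rw n hR). pose proof ln2_pos.
  apply Rdiv_lt_0_compat; [lra|]. apply Rdiv_lt_0_compat; lra.
Qed.

Lemma ratio Rw r i : 2 <= Rw -> (r <= i)%nat -> fU Rw r <= ((INR i + 1) * fU Rw i) * gI r.
Proof.
  intros hR H. unfold fU, gI. rewrite !log2_split by auto.
  pose proof (core Rw r i hR H). pose proof (lnP_pos Rw r hR). pose proof (lnP_pos Rw i hR).
  pose proof ln2_pos. pose proof (INR_p1 r). pose proof (INR_p1 i).
  set (Pr := ln (INR r + 1) + ln Rw) in *. set (Pi := ln (INR i + 1) + ln Rw) in *.
  replace (1 / (Pr / ln 2)) with (ln 2 / Pr) by (field; lra).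
  replace ((INR i + 1) * (1 / (Pi / ln 2)) * (1 / (INR r + 1))) with ((INR i + 1) * ln 2 / (Pi * (INR r + 1))) by (field; lra).
  apply Rmult_le_reg_r with (Pr * (Pi * (INR r + 1))); [apply Rmult_lt_0_compat; [lra| apply Rmult_lt_0_compat; lra]|].
  replace (ln 2 / Pr * (Pr * (Pi * (INR r + 1)))) with (ln 2 * ((INR r + 1) * Pi)) by (field; lra).
  replace ((INR i + 1) * ln 2 / (Pi * (INR r + 1)) * (Pr * (Pi * (INR r + 1)))) with (ln 2 * ((INR i + 1) * Pr)) by (field; lra).
  apply Rmult_le_compat_l; lra.
Qed.

Lemma per_i Rw Dc Ds i : 2 <= Rw -> 0 < Dc -> Dc <= Ds ->
  Dc * U (Dc / Ds) (fU Rw) i 0 <= Ds * fU Rw i.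
Proof.
  intros hR hDc hDcs. set (p := Dc / Ds).
  assert (hp : 0 <= p <= 1).
  { unfold p; split. apply Rmult_le_pos; [lra| left; apply Rinv_0_lt_compat; lra].
    apply Rmult_le_reg_r with Ds; [lra|]. field_simplify; lra. }
  assert (H1 : U p (fU Rw) i 0 <= U p (fun r => ((INR i + 1) * fU Rw i) * gI r) i 0).
  { apply U_mono; auto. intros r Hr. apply ratio; auto; lia. }
  rewrite U_scal in H1.
  pose proof (Ybound p i hp). pose proof (fU_pos Rw i hR).
  assert (hDp : Dc = p * Ds) by (unfold p; field; lra).
  assert (Dc * U p (fU Rw) i 0 <= Dc * ((INR i + 1) * fU Rw i * U p gI i 0)) by (apply Rmult_le_compat_l; lra).
  assert (Dc * ((INR i + 1) * fU Rw i * U p gI i 0) = (Ds * fU Rw i) * (p * (INR i + 1) * U p gI i 0)) by (rewrite hDp; ring).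
  assert ((Ds * fU Rw i) * (p * (INR i + 1) * U p gI i 0) <= (Ds * fU Rw i) * 1).
  { apply Rmult_le_compat_l; auto. apply Rmult_le_pos; lra. }
  lra.
Qed.


Fixpoint sumn (f : nat -> R) (n : nat) : R :=
  match n with O => 0 | S n' => sumn f n' + f n' end.

Lemma sumn_shift f n : sumn f (S n) = f 0%nat + sumn (fun i => f (S i)) n.
Proof. induction n as [|n IH]; [simpl; ring|]. change (sumn f (S (S n))) with (sumn f (S n) + f (S n)). rewrite IH. simpl. ring. Qed.

Lemma sumn_lin a b f g n : sumn (fun i => a * f i + b * g i) n = a * sumn f n + b * sumn g n.
Proof. induction n as [|n IH]; simpl; [ring| rewrite IH; ring]. Qed.

Lemma sumn_ext f g n : (forall i, f i = g i) -> sumn f n = sumn g n.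
Proof. intro H; induction n as [|n IH]; simpl; [ring| rewrite IH, H; ring]. Qed.

Lemma sumn_le f g n : (forall i, (i < n)%nat -> f i <= g i) -> sumn f n <= sumn g n.
Proof. induction n as [|n IH]; intro H; simpl; [lra|]. apply Rplus_le_compat; [apply IH; intros; apply H; lia| apply H; lia]. Qed.

Lemma sumn_sum f n : sumn f (S n) = sum_f_R0 f n.
Proof. induction n as [|n IH]; [simpl; ring|]. rewrite tech5, <- IH. reflexivity. Qed.

Lemma sumn_scal c f n : sumn (fun i => c * f i) n = c * sumn f n.
Proof. induction n as [|n IH]; simpl; [ring| rewrite IH; ring]. Qed.

Lemma E_eq Rw Dc Ds j : forall k,
  Eexp Rw Dc Ds j k = Dc * sumn (fun i => U (Dc / Ds) (fU Rw) i k) j.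
Proof.
  induction j as [|j IH]; intro k; [simpl; ring|].
  simpl Eexp. rewrite !IH. rewrite sumn_shift.
  assert (Hs : sumn (fun i => U (Dc / Ds) (fU Rw) (S i) k) j =
     (1 - Dc / Ds) * sumn (fun i => U (Dc / Ds) (fU Rw) i k) j + (Dc / Ds) * sumn (fun i => U (Dc / Ds) (fU Rw) i (S k)) j).
  { rewrite <- sumn_lin. apply sumn_ext. intro i. reflexivity. }
  rewrite Hs. simpl U. unfold fU, phiN. unfold Rdiv. ring.
Qed.

Theorem mainTheorem10 (M Rw Dc Ds : R) (L : nat)
  (hM : 0 < M) (hR : 2 <= Rw) (hDc : 0 < Dc) (hDcs : Dc <= Ds) (hL : (1 <= L)%nat)
  (hphi : forall n : nat, (n < L)%nat ->
            0 < log2 (Rw + INR n * Rw) /\ log2 (Rw + INR n * Rw) <= Dc) :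
  infinite_sum (fun t => prob_T log2 M Rw Dc Ds L t) 1 /\
  exists E : R,
    infinite_sum (fun t => INR t * prob_T log2 M Rw Dc Ds L t) E /\
    E <= Ds * sum_f_R0 (fun n => 1 / (log2 (INR n + 1) + log2 Rw)) (L - 1).
Proof.
  destruct (main_ind M Rw Dc Ds hM hDc hDcs L 0%nat) as [_ [c1 cE]].
  { intros m Hm. simpl (0 + m)%nat. apply hphi; auto. }
  assert (Hp : forall t, G M Rw Dc Ds (INR 0 * Rw) L t = prob_T log2 M Rw Dc Ds L t).
  { intro t. unfold G, prob_T, sumL. simpl INR. rewrite Rmult_0_l. f_equal. apply map_ext.
    intro l. destruct l; [|reflexivity]. destruct L; [lia|]. reflexivity. }
  split.
  - apply (cv_ext (sum_f_R0 (G M Rw Dc Ds (INR 0 * Rw) L))); [|exact c1].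
    intro n. apply sum_eq. intros; apply Hp.
  - exists (Eexp Rw Dc Ds L 0). split.
    + apply (cv_ext (sum_f_R0 (fun t => INR t * G M Rw Dc Ds (INR 0 * Rw) L t))); [|exact cE].
      intro n. apply sum_eq. intros; rewrite Hp; reflexivity.
    + rewrite E_eq. destruct L as [|L']; [lia|]. replace (S L' - 1)%nat with L' by lia.
      rewrite <- sumn_sum.
      rewrite <- sumn_scal.
      rewrite <- sumn_scal.
      apply sumn_le. intros i Hi.
      replace (1 / (log2 (INR i + 1) + log2 Rw)) with (fU Rw i).
      * apply per_i; auto.
      * unfold fU, log2. f_equal. replace (Rw + INR i * Rw) with ((INR i + 1) * Rw) by ring.
        rewrite ln_mult; [field| apply INR_p1 | lra]. pose proof ln2_pos; lra.
Qed.
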